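(* Let $(G,* )$ be a topological group with the Hurewicz property. Then $G$ has ${\sf S}_c(\mathcal{O}_{\sf nbd},\mathcal{O})$ if and only if $G$ has ${\sf S}_c(\mathcal{O},\mathcal{O})$.
   Context: For a topological group $(G,* )$ with identity $e$ and a neighborhood $U$ of $e$, let $\mathcal{O}(U)=\{x*U: x\in G\}$ and $\mathcal{O}_{\sf nbd}=\{\mathcal{O}(U): U \text{ a neighborhood of } e\}$. $\mathcal{O}$ denotes the collection of all open covers of $G$. A family $\mathcal{B}$ refines $\mathcal{A}$ if every member of $\mathcal{B}$ is contained in some member of $\mathcal{A}$. ${\sf S}_c(\mathcal{A},\mathcal{B})$: for each sequence $(A_n:n<\infty)$ of elements of $\mathcal{A}$ there is a sequence $(B_n:n<\infty)$ such that each $B_n$ is a pairwise disjoint family of open sets refining $A_n$ and $\bigcup_{n}B_n\in\mathcal{B}$. A space $X$ has the Hurewicz property if for each sequence $(\mathcal{U}_n:n<\infty)$ of open covers of $X$ there are finite $\mathcal{F}_n\subseteq\mathcal{U}_n$ such that for each $x\in X$ the set $\{n: x\notin\bigcup\mathcal{F}_n\}$ is finite. *)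

(* Defs.v *)
From Stdlib Require Import List Arith.
Import ListNotations.

Record TopGroup := {
  carrier :> Type;
  op : carrier -> carrier -> carrier;
  inv : carrier -> carrier;
  e : carrier;
  open : (carrier -> Prop) -> Prop;
  op_assoc : forall x y z, op x (op y z) = op (op x y) z;
  op_e_l : forall x, op e x = x;
  op_inv_l : forall x, op (inv x) x = e;
  open_full : open (fun _ => True);
  open_empty : open (fun _ => False);
  open_inter : forall U V, open U -> open V -> open (fun x => U x /\ V x);
  open_union : forall (F : (carrier -> Prop) -> Prop),
      (forall U, F U -> open U) -> open (fun x => exists U, F U /\ U x);
  op_cont : forall (W : carrier -> Prop) x y, open W -> W (op x y) ->
      exists U V, open U /\ open V /\ U x /\ V y /\
        (forall a b, U a -> V b -> W (op a b));
  inv_cont : forall (W : carrier -> Prop) x, open W -> W (inv x) ->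
      exists U, open U /\ U x /\ (forall a, U a -> W (inv a))
}.

Section Defs.
Variable G : TopGroup.

Definition set := G -> Prop.
Definition family := set -> Prop.

Definition nbd_e (U : set) : Prop :=
  exists V, open G V /\ V (e G) /\ (forall x, V x -> U x).

Definition lcoset (x : G) (U : set) : set :=
  fun y => exists u, U u /\ y = op G x u.

Definition OU (U : set) : family :=
  fun V => exists x, forall y, V y <-> lcoset x U y.

Definition O_nbd (A : family) : Prop :=
  exists U, nbd_e U /\ (forall V, A V <-> OU U V).

Definition open_cover (A : family) : Prop :=
  (forall V, A V -> open G V) /\ (forall x, exists V, A V /\ V x).

Definition refines (B A : family) : Prop :=
  forall V, B V -> exists W, A W /\ (forall x, V x -> W x).

Definition pairwise_disjoint (B : family) : Prop :=
  forall V W, B V -> B W -> (exists x, V x /\ W x) -> (forall x, V x <-> W x).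

Definition Sc (clsA clsB : family -> Prop) : Prop :=
  forall A : nat -> family, (forall n, clsA (A n)) ->
    exists Bs : nat -> family,
      (forall n, pairwise_disjoint (Bs n) /\
                 (forall V, Bs n V -> open G V) /\
                 refines (Bs n) (A n)) /\
      clsB (fun V => exists n, Bs n V).

Definition Hurewicz : Prop :=
  forall U : nat -> family, (forall n, open_cover (U n)) ->
    exists F : nat -> list set,
      (forall n V, In V (F n) -> U n V) /\
      (forall x, exists N, forall n, N <= n -> exists V, In V (F n) /\ V x).

End Defs.

(* Main.v *)
Require Import Defs.
From Stdlib Require Import List Arith Lia Cantor.
From Stdlib Require Import FunctionalExtensionality PropExtensionality IndefiniteDescription.
Import ListNotations.

Section Aux.
Variable G : TopGroup.

Lemma inv_r (x : G) : op G x (inv G x) = e G.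
Proof.
  rewrite <- (op_e_l G (op G x (inv G x))).
  rewrite <- (op_inv_l G (inv G x)) at 1.
  rewrite <- op_assoc. rewrite (op_assoc G (inv G x) x (inv G x)).
  rewrite op_inv_l, op_e_l. apply op_inv_l.
Qed.

Lemma op_e_r (x : G) : op G x (e G) = x.
Proof.
  rewrite <- (op_inv_l G x). rewrite op_assoc, inv_r. apply op_e_l.
Qed.

Lemma open_ext (U V : G -> Prop) : open G U -> (forall x, U x <-> V x) -> open G V.
Proof.
  intros HU H. replace V with U; auto.
  apply functional_extensionality; intro x; apply propositional_extensionality; auto.
Qed.

Lemma nbhd3 (x : G) W : open G W -> W x -> exists V, open G V /\ V (e G) /\
  forall a b, V a -> V b -> W (op G (op G x a) b).
Proof.
  intros HW Wx.
  destruct (op_cont G W (op G x (e G)) (e G) HW) as [U1 [V1 [HU1 [HV1 [U1x [V1e H1]]]]]].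
  { rewrite !op_e_r; auto. }
  destruct (op_cont G U1 x (e G) HU1 U1x) as [U2 [V2 [HU2 [HV2 [U2x [V2e H2]]]]]].
  exists (fun a => V1 a /\ V2 a). split; [apply open_inter; auto|]. split; [auto|].
  intros a b [Ha1 Ha2] [Hb1 Hb2]. apply H1; auto.
Qed.

Lemma nbhd_inv (V' : G -> Prop) : open G V' -> V' (e G) -> exists U, open G U /\ U (e G) /\
  forall u0 u, U u0 -> U u -> V' (op G (inv G u0) u).
Proof.
  intros HV Ve.
  destruct (op_cont G V' (inv G (e G)) (e G) HV) as [U1 [V1 [HU1 [HV1 [U1x [V1e H1]]]]]].
  { rewrite op_inv_l; auto. }
  destruct (inv_cont G U1 (e G) HU1 U1x) as [U2 [HU2 [U2e H2]]].
  exists (fun a => U2 a /\ V1 a). split; [apply open_inter; auto|]. split; [auto|].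
  intros u0 u [? ?] [? ?]. apply H1; auto.
Qed.

Lemma lcoset_open (x : G) V : open G V -> open G (lcoset G x V).
Proof.
  intros HV.
  apply open_ext with (fun y => exists O, (open G O /\ forall b, O b -> lcoset G x V b) /\ O y).
  - apply open_union. intros U [? ?]; auto.
  - intro y; split.
    + intros [O [[_ H] Oy]]; auto.
    + intros [u [Vu Hy]].
      destruct (op_cont G V (inv G x) y HV) as [U1 [V1 [HU1 [HV1 [U1x [V1y H1]]]]]].
      { rewrite Hy, op_assoc, op_inv_l, op_e_l; auto. }
      exists V1; split; auto. split; auto.
      intros b Hb. exists (op G (inv G x) b). split; auto.
      rewrite op_assoc, inv_r, op_e_l; auto.
Qed.

Lemma open_list_inter (P : list G) (f : G -> G -> Prop) : (forall x, open G (f x)) ->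
  open G (fun a => forall x, In x P -> f x a).
Proof.
  intros Hf. induction P as [|x0 P IH].
  - apply open_ext with (fun _ => True). apply open_full. intro; simpl; split; tauto.
  - apply open_ext with (fun a => f x0 a /\ (forall x, In x P -> f x a)).
    + apply open_inter; auto.
    + intro a; simpl; split.
      * intros [H1 H2] x [<-|Hx]; auto.
      * intros H; split; auto.
Qed.

Lemma list_pts (L : list (G -> Prop)) (g : G -> G -> Prop) :
  (forall S, In S L -> exists x, S = g x) ->
  exists P, forall S, In S L -> exists x, In x P /\ S = g x.
Proof.
  induction L as [|S0 L IH]; intros H.
  - exists []; intros S [].
  - destruct IH as [P HP]. { intros; apply H; simpl; auto. }
    destruct (H S0) as [x0 Hx0]; simpl; auto.
    exists (x0 :: P). intros S [<-|HS].
    + exists x0; simpl; auto.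
    + destruct (HP S HS) as [x [? ?]]. exists x; simpl; auto.
Qed.

End Aux.

Theorem theorem2p5 (G : TopGroup) (HG : Hurewicz G) :
  Sc G (O_nbd G) (open_cover G) <-> Sc G (open_cover G) (open_cover G).
Proof.
  split.
  - intros Hnbd A HA.
    assert (Hc : forall p : nat * G, exists q : set G * set G,
      A (fst p) (fst q) /\ fst q (snd p) /\ open G (snd q) /\ snd q (e G) /\
      forall a b, snd q a -> snd q b -> fst q (op G (op G (snd p) a) b)).
    { intros [n x]. destruct (HA n) as [Ho Hcov]. destruct (Hcov x) as [W [AW Wx]].
      destruct (nbhd3 G x W (Ho W AW) Wx) as [V [? [? ?]]].
      exists (W, V); simpl; auto. }
    destruct (functional_choice _ Hc) as [f Hf]. clear Hc.
    set (W := fun n x => fst (f (n, x))). set (V := fun n x => snd (f (n, x))).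
    set (C := fun n (S : set G) => exists x, S = lcoset G x (V n x)).
    destruct (HG C) as [F [HF1 HF2]].
    { intro n; split.
      - intros S [x ->]. apply lcoset_open. apply (Hf (n, x)).
      - intro y. exists (lcoset G y (V n y)). split. exists y; auto.
        exists (e G). split. apply (Hf (n, y)). symmetry; apply op_e_r. }
    assert (HP : forall n, exists P : list G, forall S, In S (F n) ->
       exists x, In x P /\ S = lcoset G x (V n x)).
    { intro n. apply list_pts. intros S HS. apply (HF1 n S HS). }
    destruct (functional_choice _ HP) as [P HPn]. clear HP.
    set (V' := fun n a => forall x, In x (P n) -> V n x a).
    assert (HU : forall n, exists U, open G U /\ U (e G) /\
      forall u0 u, U u0 -> U u -> V' n (op G (inv G u0) u)).
    { intro n. apply nbhd_inv.
      - apply open_list_inter. intro x. apply (Hf (n, x)).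
      - intros x _. apply (Hf (n, x)). }
    destruct (functional_choice _ HU) as [Uf HUf]. clear HU.
    set (X := fun n y => exists x, In x (P n) /\ lcoset G x (V n x) y).
    assert (Htail : forall y, exists N, forall n, N <= n -> X n y).
    { intro y. destruct (HF2 y) as [N HN]. exists N. intros n Hn.
      destruct (HN n Hn) as [S [HS Sy]]. destruct (HPn n S HS) as [x [Hx ->]].
      exists x; auto. }
    assert (HB : forall N, exists Bs : nat -> family G,
      (forall k, pairwise_disjoint G (Bs k) /\ (forall S, Bs k S -> open G S) /\
         refines G (Bs k) (OU G (Uf (to_nat (N, k))))) /\
      open_cover G (fun S => exists k, Bs k S)).
    { intro N. apply Hnbd. intro k. exists (Uf (to_nat (N, k))). split.
      - exists (Uf (to_nat (N, k))). split; [apply HUf|]. split; [apply HUf|]. auto.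
      - intro; tauto. }
    destruct (functional_choice _ HB) as [BB HBB]. clear HB.
    exists (fun n S => BB (fst (of_nat n)) (snd (of_nat n)) S /\ exists z, S z /\ X n z).
    split.
    + intro n. destruct (of_nat n) as [N k] eqn:Hd. simpl.
      assert (Hn : to_nat (N, k) = n) by (rewrite <- Hd; apply cancel_to_of).
      destruct (HBB N) as [Hk _]. destruct (Hk k) as [Hdis [Hop Href]].
      rewrite Hn in Href.
      split; [|split].
      * intros S1 S2 [H1 _] [H2 _]. apply Hdis; auto.
      * intros S [H1 _]; auto.
      * intros S [HS [z [Sz [x [Hx [a [Va Hz]]]]]]].
        destruct (Href S HS) as [T [[x' HT] HST]].
        exists (W n x). split. apply (Hf (n, x)).
        intros v Sv.
        destruct (proj1 (HT v) (HST v Sv)) as [u [Uu Hv]].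
        destruct (proj1 (HT z) (HST z Sz)) as [u0 [Uu0 Hz0]].
        assert (Hb : V n x (op G (inv G u0) u)).
        { apply (proj2 (proj2 (HUf n)) u0 u Uu0 Uu x Hx). }
        assert (Heq : v = op G (op G x a) (op G (inv G u0) u)).
        { rewrite <- Hz, Hz0, Hv. rewrite <- (op_assoc G x' u0).
          rewrite (op_assoc G u0 (inv G u0) u), inv_r, op_e_l. reflexivity. }
        rewrite Heq. apply (proj2 (proj2 (proj2 (proj2 (Hf (n, x)))))); auto.
    + split.
      * intros S [n [HS _]]. destruct (HBB (fst (of_nat n))) as [Hk _].
        apply (Hk (snd (of_nat n))); auto.
      * intro y. destruct (Htail y) as [N HN].
        destruct (HBB N) as [_ [_ Hcov]]. destruct (Hcov y) as [S [[k HS] Sy]].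
        exists S. split; auto. exists (to_nat (N, k)).
        rewrite cancel_of_to. cbn [fst snd]. split; auto.
        exists y. split; auto. apply HN.
        pose proof (to_nat_non_decreasing N k). lia.
  - intros Hoo A HA.
    assert (Hc : forall n, exists q : set G * set G,
      (forall S, A n S <-> OU G (fst q) S) /\ open G (snd q) /\ snd q (e G) /\
      (forall x, snd q x -> fst q x)).
    { intro n. destruct (HA n) as [U0 [[V0 [? [? ?]]] HU0]]. exists (U0, V0); simpl; auto. }
    destruct (functional_choice _ Hc) as [f Hf]. clear Hc.
    destruct (Hoo (fun n S => exists x, S = lcoset G x (snd (f n)))) as [Bs [HBs Hcov]].
    { intro n. split.
      - intros S [x ->]. apply lcoset_open. apply Hf.
      - intro y. exists (lcoset G y (snd (f n))). split. exists y; auto.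
        exists (e G). split. apply Hf. symmetry; apply op_e_r. }
    exists Bs. split; auto. intro n. destruct (HBs n) as [H1 [H2 H3]].
    split; auto. split; auto.
    intros S HS. destruct (H3 S HS) as [T [[x ->] HST]].
    exists (lcoset G x (fst (f n))). split.
    + apply (proj1 (Hf n)). exists x. intro; tauto.
    + intros y Sy. destruct (HST y Sy) as [u [Hu ->]]. exists u. split; auto.
      apply (proj2 (proj2 (proj2 (Hf n)))); auto.
Qed.
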